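(* Under Assumptions 1 and 2, for the accurate-gradient algorithm and every $t\in\{1,\dots,T\}$, $$-\eta_t\sum_{i=1}^n\big(g_i^t(x_i(t))\big)^Ty_i(t)\le\frac12\sum_{i=1}^n\big(\|y_i(t)\|^2-\|y_i(t+1)\|^2\big)+\eta_t^2(n\kappa_2^2+n^2\kappa_2^2)+\frac92\sum_{i=1}^n\|y_i(t)-\bar y(t)\|^2+2\eta_t(\kappa_2+\sqrt n\kappa_2)\sum_{i=1}^n\|y_i(t)-\bar y(t)\|,$$ where $\bar y(t)=\frac1n\sum_iy_i(t)$.
   Context: Network: Let $n\ge2$, $\mathcal V=\{1,\dots,n\}$. For $t=0,1,2,\dots$, $\mathcal G(t)=(\mathcal V,\mathcal E(t),A(t))$ is a digraph with weight matrix $A(t)=(a_{ij}(t))_{n\times n}$, where for some $\gamma>0$, $\gamma\le a_{ij}(t)\le1$ if $(j,i)\in\mathcal E(t)$ and $a_{ij}(t)=0$ otherwise; $\mathcal N_i(t)=\{j:(j,i)\in\mathcal E(t)\}$ and $i\in\mathcal N_i(t)$. Assumption 1: there is an integer $U>0$ such that for every $t\ge0$ the digraph $(\mathcal V,\bigcup_{k=tU}^{(t+1)U-1}\mathcal E(k))$ is strongly connected, and $A(t)1_n=A(t)^T1_n=1_n$ for all $t$. Problem: $\Omega\subset\mathbb R^m$ is convex; for each $i\in\mathcal V$ and $t\ge0$, $f_i^t:\Omega\times\Omega\to\mathbb R$ and $g_i^t=(g_{i1}^t,\dots,g_{ih}^t)^T:\Omega\to\mathbb R^h$; $\mathcal X^t=\{x\in\Omega:\sum_ig_i^t(x)\le0\}$;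 $\nabla_2$ is the gradient in the second argument; $\nabla g_i^t(x)=[\nabla g_{i1}^t(x),\dots,\nabla g_{ih}^t(x)]\in\mathbb R^{m\times h}$. Assumption 2: (i) $f_i^t(x,\cdot)$ convex, each $g_{ik}^t$ convex (differentiable); (ii) $\mathcal X^t\neq\emptyset$, $\Omega$ compact with $\|x\|\le\kappa$ on $\Omega$; (iii) $\|\nabla_2f_i^t(x,y)\|\le\kappa_1$, $\|g_i^t(x)\|\le\kappa_2$, $\|\nabla g_{ik}^t(x)\|\le\kappa_3$ on $\Omega$. Algorithm: $\phi:\mathbb R^m\to\mathbb R$ differentiable and $\mu$-strongly convex, $\mathcal D_\phi(x,y)=\phi(x)-\phi(y)-\langle\nabla\phi(y),x-y\rangle$. Non-increasing step sizes $\zeta_t,\eta_t\in(0,1]$ with $\zeta_t\le\eta_t$; $x_i(0)\in\Omega$, $y_i(0)=0\in\mathbb R^h$; for $t\ge0$: $z_i(t)=\sum_{j\in\mathcal N_i(t)}a_{ij}(t)x_j(t)$; $x_i(t+1)=\arg\min_{x\in\Omega}\{\mathcal D_\phi(x,z_i(t))+\langle\zeta_t\nabla_2f_i^t(x_i(t),x_i(t))+\eta_t\nabla g_i^t(x_i(t))y_i(t),x\rangle\}$; $y_i(t+1)=[(1-\eta_t)\sum_{j\in\mathcal N_i(t)}a_{ij}(t)y_j(t)+\eta_tg_i^t(x_i(t))]_+$. $T$ is the time horizon. *)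

(* Defs.v *)
From HB Require Import structures.
From mathcomp Require Import all_boot all_order all_algebra.
From mathcomp Require Import all_classical all_reals all_analysis.
Set Implicit Arguments. Unset Strict Implicit. Unset Printing Implicit Defensive.
Import Order.TTheory GRing.Theory Num.Theory.
Import numFieldNormedType.Exports.
Local Open Scope classical_set_scope.
Local Open Scope ring_scope.

Section Defs.
Variable R : realType.

Definition dotv {k} (u v : 'cV[R]_k) : R := \sum_(l < k) u l 0 * v l 0.
Definition enorm {k} (u : 'cV[R]_k) : R := Num.sqrt (dotv u u).

Definition pospart {k} (u : 'cV[R]_k) : 'cV[R]_k :=
  \col_(l < k) Num.max (u l 0) 0.

Definition nonpos_vec {k} (u : 'cV[R]_k) : Prop := forall l, u l 0 <= 0.

Definition convex_on {m} (Om : set 'cV[R]_m) (F : 'cV[R]_m -> R) : Prop :=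
  forall x y (l : R), Om x -> Om y -> 0 <= l <= 1 ->
    F (l *: x + (1 - l) *: y) <= l * F x + (1 - l) * F y.

Definition gradient_on {m} (Om : set 'cV[R]_m) (F : 'cV[R]_m -> R^o)
    (G : 'cV[R]_m -> 'cV[R]_m) : Prop :=
  forall x, Om x -> differentiable F x /\ forall v, 'D_v F x = dotv (G x) v.

Definition strongly_convex {m} (mu : R) (phi : 'cV[R]_m -> R^o)
    (Gphi : 'cV[R]_m -> 'cV[R]_m) : Prop :=
  0 < mu /\ gradient_on setT phi Gphi /\
  forall x y, phi x >= phi y + dotv (Gphi y) (x - y) + mu / 2 * enorm (x - y) ^+ 2.

Definition bregman {m} (phi : 'cV[R]_m -> R) (Gphi : 'cV[R]_m -> 'cV[R]_m)
    (x y : 'cV[R]_m) : R := phi x - phi y - dotv (Gphi y) (x - y).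

(* time-varying network: E t j i <-> (j,i) in E(t); weights a t i j = a_ij(t) *)
Definition union_graph {n} (E : nat -> rel 'I_n) (U t : nat) : rel 'I_n :=
  fun j i => [exists k : 'I_U, E (t * U + k)%N j i].

Definition network_assumptions {n} (gam : R) (U : nat) (E : nat -> rel 'I_n)
    (a : nat -> 'I_n -> 'I_n -> R) : Prop :=
  0 < gam /\
  (forall t i j, E t j i -> gam <= a t i j <= 1) /\
  (forall t i j, ~~ E t j i -> a t i j = 0) /\
  (forall t i, E t i i) /\
  (* Assumption 1 *)
  (0 < U)%N /\
  (forall t i j, connect (union_graph E U t) i j) /\
  (forall t i, \sum_(j < n) a t i j = 1) /\
  (forall t j, \sum_(i < n) a t i j = 1).

Definition avg {n h} (y : 'I_n -> 'cV[R]_h) : 'cV[R]_h :=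
  n%:R^-1 *: \sum_(i < n) y i.

End Defs.

(* Main.v *)
Require Import Defs.
From HB Require Import structures.
From mathcomp Require Import all_boot all_order all_algebra.
From mathcomp Require Import all_classical all_reals all_analysis.
From mathcomp Require Import ring lra.
Set Implicit Arguments. Unset Strict Implicit.
Import Order.TTheory GRing.Theory Num.Theory.
Import numFieldNormedType.Exports.
Local Open Scope classical_set_scope.
Local Open Scope ring_scope.

Section Helpers.
Variable R : realType.
Variable k : nat.
Implicit Types u v w : 'cV[R]_k.

Lemma dotvC u v : dotv u v = dotv v u.
Proof. by apply: eq_bigr => l _; rewrite mulrC. Qed.

Lemma dotvDr u v w : dotv u (v + w) = dotv u v + dotv u w.
Proof. by rewrite /dotv -big_split; apply: eq_bigr => l _; rewrite mxE mulrDr. Qed.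

Lemma dotvZr u v (c : R) : dotv u (c *: v) = c * dotv u v.
Proof. by rewrite /dotv mulr_sumr; apply: eq_bigr => l _; rewrite mxE mulrCA. Qed.

Lemma dotvNr u v : dotv u (- v) = - dotv u v.
Proof. by rewrite -scaleN1r dotvZr mulN1r. Qed.

Lemma dotvBr u v w : dotv u (v - w) = dotv u v - dotv u w.
Proof. by rewrite dotvDr dotvNr. Qed.

Lemma dotvDl u v w : dotv (v + w) u = dotv v u + dotv w u.
Proof. by rewrite dotvC dotvDr !(dotvC u). Qed.
Lemma dotvZl u v (c : R) : dotv (c *: v) u = c * dotv v u.
Proof. by rewrite dotvC dotvZr dotvC. Qed.
Lemma dotvBl u v w : dotv (v - w) u = dotv v u - dotv w u.
Proof. by rewrite dotvC dotvBr !(dotvC u). Qed.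

Lemma dotv_sumr (I : finType) u (F : I -> 'cV[R]_k) :
  dotv u (\sum_(j : I) F j) = \sum_(j : I) dotv u (F j).
Proof.
rewrite /dotv exchange_big /=; apply: eq_bigr => l _.
by rewrite summxE mulr_sumr.
Qed.

Lemma dotv_ge0 u : 0 <= dotv u u.
Proof. by apply: sumr_ge0 => l _; rewrite -expr2 sqr_ge0. Qed.

Lemma enorm_ge0 u : 0 <= enorm u.
Proof. exact: sqrtr_ge0. Qed.

Lemma enorm_sq u : enorm u ^+ 2 = dotv u u.
Proof. by rewrite sqr_sqrtr // dotv_ge0. Qed.

Lemma dotv_eq0 u : dotv u u = 0 -> forall v, dotv u v = 0.
Proof.
move=> /eqP; rewrite psumr_eq0; last by move=> l _; rewrite -expr2 sqr_ge0.
move=> /allP H v; apply: big1 => l _.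
have := H l (mem_index_enum l); rewrite /= mulf_eq0 orbb => /eqP ->.
by rewrite mul0r.
Qed.

Lemma CS2 u v : dotv u v ^+ 2 <= dotv u u * dotv v v.
Proof.
set A := dotv u u; set B := dotv u v; set C := dotv v v.
have hA : 0 <= A by apply: dotv_ge0.
have hC : 0 <= C by apply: dotv_ge0.
have [C0|Cpos] := eqVneq C 0.
  have : B = 0 by rewrite /B dotvC; apply: dotv_eq0.
  by move=> ->; rewrite C0 expr0n /= mulr0.
have Cp : 0 < C by rewrite lt0r Cpos.
have := dotv_ge0 (C *: u - B *: v).
rewrite !(dotvBl, dotvBr, dotvZl, dotvZr) -/A -/B -/C (dotvC v u) -/B.
move=> H.
have : 0 <= C * (A * C - B ^+ 2) by rewrite -[X in _ <= X]opprK; nra.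
by rewrite pmulr_rge0 // subr_ge0 mulrC.
Qed.

Lemma CS u v : dotv u v <= enorm u * enorm v.
Proof.
rewrite /enorm -sqrtrM ?dotv_ge0 //.
apply: le_trans (ler_norm _) _.
by rewrite -sqrtr_sqr ler_sqrt ?CS2 // mulr_ge0 ?dotv_ge0.
Qed.

Lemma dotvNl u v : dotv (- v) u = - dotv v u.
Proof. by rewrite dotvC dotvNr dotvC. Qed.

Lemma enormN u : enorm (- u) = enorm u.
Proof. by rewrite /enorm dotvNl dotvNr opprK. Qed.

Lemma CSabs u v : `|dotv u v| <= enorm u * enorm v.
Proof.
have [h|h] := ler0P (dotv u v).
  by rewrite -dotvNr -(enormN v); apply: CS.
by apply: CS.
Qed.

Lemma enormD u v : enorm (u + v) <= enorm u + enorm v.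
Proof.
rewrite -(ler_pXn2r (n:=2)) ?nnegrE ?addr_ge0 ?enorm_ge0 //.
rewrite enorm_sq dotvDl !dotvDr (dotvC u v) sqrrD !enorm_sq.
have := CS v u; lra.
Qed.

Lemma enormZ u (c : R) : enorm (c *: u) = `|c| * enorm u.
Proof.
by rewrite /enorm dotvZl dotvZr mulrA -expr2 sqrtrM ?sqr_ge0 // sqrtr_sqr.
Qed.

Lemma enorm_sum (I : finType) (F : I -> 'cV[R]_k) :
  enorm (\sum_(j : I) F j) <= \sum_(j : I) enorm (F j).
Proof.
apply: (big_ind2 (fun a b => enorm a <= b)).
- by rewrite /enorm /dotv big1 ?sqrtr0 // => l _; rewrite mxE mul0r.
- by move=> a b c d h1 h2; apply: le_trans (enormD _ _) (lerD h1 h2).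
- by [].
Qed.

Lemma enorm_conv (I : finType) (a : I -> R) (F : I -> 'cV[R]_k) :
  (forall j, 0 <= a j) ->
  enorm (\sum_(j : I) a j *: F j) <= \sum_(j : I) a j * enorm (F j).
Proof.
move=> ha; have H := enorm_sum (fun j => a j *: F j).
refine (le_trans H _); apply: ler_sum => j _.
by rewrite enormZ ger0_norm.
Qed.

Lemma dotv_comb (p q : 'cV[R]_k) (c d : R) :
  dotv (c *: p + d *: q) (c *: p + d *: q) =
  c ^+ 2 * dotv p p + 2 * c * d * dotv q p + d ^+ 2 * dotv q q.
Proof.
rewrite !(dotvDl, dotvDr, dotvZl, dotvZr) (dotvC p q); lra.
Qed.

Lemma pospart_le (v : 'cV[R]_k) : dotv (pospart v) (pospart v) <= dotv v v.
Proof.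
apply: ler_sum => l _; rewrite !mxE -!expr2.
case: (leP (v l 0) 0) => h.
  by rewrite expr0n /= sqr_ge0.
by [].
Qed.
Lemma enorm_pos (v : 'cV[R]_k) : enorm (pospart v) <= enorm v.
Proof. by rewrite /enorm ler_sqrt ?dotv_ge0 ?pospart_le. Qed.
End Helpers.

Section Jensen.
Variable R : realType.
Lemma jensen (I : finType) (a r : I -> R) :
  (forall j, 0 <= a j) -> \sum_j a j = 1 ->
  (\sum_j a j * r j) ^+ 2 <= \sum_j a j * r j ^+ 2.
Proof.
move=> ha h1; set S := \sum_j a j * r j.
have : 0 <= \sum_j a j * (r j - S) ^+ 2.
  by apply: sumr_ge0 => j _; rewrite mulr_ge0 ?sqr_ge0.
have -> : \sum_j a j * (r j - S) ^+ 2 =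
   \sum_j (a j * r j ^+ 2 - (2 * S) * (a j * r j) + S ^+ 2 * a j).
  by apply: eq_bigr => j _; ring.
rewrite big_split sumrB /= -!mulr_sumr -/S h1; lra.
Qed.
End Jensen.

Unset Implicit Arguments. Set Strict Implicit.
Theorem lemma6 (R : realType) (n m h : nat) (n_ge2 : (2 <= n)%N)
  (* network *)
  (gam : R) (U : nat) (E : nat -> rel 'I_n) (a : nat -> 'I_n -> 'I_n -> R)
  (Hnet : network_assumptions gam U E a)
  (* problem data *)
  (Om : set 'cV[R]_m)
  (f : nat -> 'I_n -> 'cV[R]_m -> 'cV[R]_m -> R^o)
  (Gf : nat -> 'I_n -> 'cV[R]_m -> 'cV[R]_m -> 'cV[R]_m)
  (g : nat -> 'I_n -> 'cV[R]_m -> 'cV[R]_h)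
  (Gg : nat -> 'I_n -> 'cV[R]_m -> 'M[R]_(m, h))
  (kap kap1 kap2 kap3 : R)
  (HOm_convex : convex_set Om)
  (* Assumption 2 (i) *)
  (Hf_convex : forall t i x, Om x -> convex_on Om (f t i x))
  (Hf_grad : forall t i x, Om x -> gradient_on Om (f t i x) (Gf t i x))
  (Hg_convex : forall t i (k : 'I_h), convex_on Om (fun z => g t i z k 0))
  (Hg_grad : forall t i (k : 'I_h),
      gradient_on Om (fun z => (g t i z k 0 : R^o)) (fun z => col k (Gg t i z)))
  (* Assumption 2 (ii) *)
  (HX_nonempty : forall t, exists x, Om x /\ nonpos_vec (\sum_(i < n) g t i x))
  (HOm_compact : compact Om)
  (HOm_bound : forall x, Om x -> enorm x <= kap)
  (* Assumption 2 (iii) *)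
  (Hkap1 : forall t i x y, Om x -> Om y -> enorm (Gf t i x y) <= kap1)
  (Hkap2 : forall t i x, Om x -> enorm (g t i x) <= kap2)
  (Hkap3 : forall t i (k : 'I_h) x, Om x -> enorm (col k (Gg t i x)) <= kap3)
  (* mirror map *)
  (mu : R) (phi : 'cV[R]_m -> R^o) (Gphi : 'cV[R]_m -> 'cV[R]_m)
  (Hphi : strongly_convex mu phi Gphi)
  (* step sizes *)
  (zeta eta : nat -> R)
  (Hzeta : forall t, 0 < zeta t <= 1) (Heta : forall t, 0 < eta t <= 1)
  (Hzeta_noninc : forall t, zeta t.+1 <= zeta t)
  (Heta_noninc : forall t, eta t.+1 <= eta t)
  (Hzeta_eta : forall t, zeta t <= eta t)
  (* the algorithm's iterates *)
  (x : 'I_n -> nat -> 'cV[R]_m) (y : 'I_n -> nat -> 'cV[R]_h)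
  (Hx0 : forall i, Om (x i 0%N)) (Hy0 : forall i, y i 0%N = 0)
  (Hx_step : forall i t,
      let z := \sum_(j < n) a t i j *: x j t in
      let obj := fun w => bregman phi Gphi w z
        + dotv (zeta t *: Gf t i (x i t) (x i t) + eta t *: (Gg t i (x i t) *m y i t)) w in
      Om (x i t.+1) /\ forall w, Om w -> obj (x i t.+1) <= obj w)
  (Hy_step : forall i t,
      y i t.+1 = pospart ((1 - eta t) *: (\sum_(j < n) a t i j *: y j t)
                          + eta t *: g t i (x i t)))
  (T t : nat) (Ht : (1 <= t <= T)%N) :
  let ybar := avg (fun i => y i t) in
  - eta t * (\sum_(i < n) dotv (g t i (x i t)) (y i t))
  <= 1 / 2 * (\sum_(i < n) (enorm (y i t) ^+ 2 - enorm (y i t.+1) ^+ 2))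
     + eta t ^+ 2 * (n%:R * kap2 ^+ 2 + n%:R ^+ 2 * kap2 ^+ 2)
     + 9 / 2 * (\sum_(i < n) enorm (y i t - ybar) ^+ 2)
     + 2 * eta t * (kap2 + Num.sqrt n%:R * kap2) * (\sum_(i < n) enorm (y i t - ybar)).
Proof.
cbv zeta; set ybar := avg _.
case: Hnet => gam_pos [Ha_bnd [Ha0 [_ [_ [_ [Hrow Hcol]]]]]].
have a_ge0 : forall t0 i j, 0 <= a t0 i j.
  move=> t0 i j; case: (boolP (E t0 j i)) => hE.
  - have /andP[hh _] := Ha_bnd t0 i j hE; exact: le_trans (ltW gam_pos) hh.
  - by rewrite Ha0.
have Omx : forall i t0, Om (x i t0).
  by move=> i [|t0] //; case: (Hx_step i t0).
have n0 : (0 < n)%N by apply: leq_trans _ n_ge2.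
pose i0 : 'I_n := Ordinal n0.
have kap2_ge0 : 0 <= kap2.
  exact: le_trans (enorm_ge0 _) (Hkap2 0%N i0 _ (Hx0 i0)).
have wbound : forall t0 i, (forall j, enorm (y j t0) <= kap2) ->
    enorm (\sum_j a t0 i j *: y j t0) <= kap2.
  move=> t0 i hy.
  apply: le_trans (enorm_conv (fun j => y j t0) (fun j => a_ge0 t0 i j)) _.
  apply: le_trans (_ : \sum_j a t0 i j * kap2 <= _).
    by apply: ler_sum => j _; apply: ler_wpM2l.
  by rewrite -mulr_suml Hrow mul1r.
have ybound : forall t0 i, enorm (y i t0) <= kap2.
  elim=> [|t0 IH] i.
    by rewrite Hy0 /enorm /dotv big1 ?sqrtr0 // => l _; rewrite mxE mul0r.
  have /andP[e0 e1] := Heta t0.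
  rewrite Hy_step; apply: le_trans (enorm_pos _) _.
  apply: le_trans (enormD _ _) _.
  rewrite !enormZ !ger0_norm ?subr_ge0 ?(ltW e0) //.
  have h1 := wbound t0 i IH.
  have h2 := Hkap2 t0 i _ (Omx i t0).
  have h3 := enorm_ge0 (\sum_j a t0 i j *: y j t0).
  have h4 := enorm_ge0 (g t0 i (x i t0)).
  nra.
set et := eta t.
have e0 : 0 < et by case/andP: (Heta t).
have e1 : et <= 1 by case/andP: (Heta t).
pose gi i := g t i (x i t).
pose w i := \sum_j a t i j *: y j t.
have hg : forall i, enorm (gi i) <= kap2 by move=> i; apply: Hkap2.
have hw : forall i, enorm (w i) <= kap2 by move=> i; apply: wbound.
have F1 : forall i, enorm (y i t.+1) ^+ 2 <=
    (1 - et) ^+ 2 * dotv (w i) (w i) + 2 * (1 - et) * et * dotv (gi i) (w i)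
    + et ^+ 2 * dotv (gi i) (gi i).
  by move=> i; rewrite enorm_sq Hy_step -dotv_comb; apply: pospart_le.
set W := \sum_i dotv (w i) (w i).
set GW := \sum_i dotv (gi i) (w i).
set GG := \sum_i dotv (gi i) (gi i).
set Y := \sum_i enorm (y i t) ^+ 2.
set Yp := \sum_i enorm (y i t.+1) ^+ 2.
set G := \sum_i dotv (g t i (x i t)) (y i t).
set D1 := \sum_i enorm (y i t - ybar).
set D2 := \sum_i enorm (y i t - ybar) ^+ 2.
have S1 : Yp <= (1 - et) ^+ 2 * W + 2 * (1 - et) * et * GW + et ^+ 2 * GG.
  rewrite /W /GW /GG !mulr_sumr -!big_split; apply: ler_sum => i _; exact: F1.
have S2 : W <= Y.
  have E1 : \sum_i \sum_j a t i j * enorm (y j t) ^+ 2 = Y.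
    rewrite exchange_big; apply: eq_bigr => j _.
    by rewrite -mulr_suml Hcol mul1r.
  rewrite -E1; apply: ler_sum => i _.
  apply: le_trans (jensen (fun j => enorm (y j t)) (fun j => a_ge0 t i j) (Hrow t i)).
  rewrite -enorm_sq.
  have h1 := enorm_conv (fun j => y j t) (fun j => a_ge0 t i j).
  have h2 := enorm_ge0 (w i).
  rewrite -/(w i) in h1.
  nra.
have S3 : GG <= n%:R * kap2 ^+ 2.
  apply: le_trans (_ : \sum_(i < n) kap2 ^+ 2 <= _).
    apply: ler_sum => i _; rewrite -enorm_sq.
    have := hg i; have := enorm_ge0 (gi i); nra.
  by rewrite sumr_const card_ord mulr_natl.
have S5 : - (n%:R * kap2 ^+ 2) <= GW.
  apply: le_trans (_ : \sum_(i < n) - kap2 ^+ 2 <= _).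
    by rewrite sumr_const card_ord mulr_natl mulNrn.
  apply: ler_sum => i _.
  have := CSabs (gi i) (w i).
  have := hg i; have := hw i; have := enorm_ge0 (gi i); have := enorm_ge0 (w i).
  rewrite ler_norml => ? ? ? ? /andP[? ?]; nra.
have S4 : - (2 * kap2 * D1) <= G - GW.
  have -> : G - GW = \sum_i dotv (gi i) (y i t - w i).
    by rewrite /G /GW -sumrB; apply: eq_bigr => i _; rewrite dotvBr.
  have Ew : forall i, w i - ybar = \sum_j a t i j *: (y j t - ybar).
    move=> i; under eq_bigr => j _ do rewrite scalerBr.
    by rewrite sumrB -scaler_suml Hrow scale1r.
  have Sw : \sum_i enorm (w i - ybar) <= D1.
    apply: le_trans (_ : \sum_i \sum_j a t i j * enorm (y j t - ybar) <= _).
      apply: ler_sum => i _; rewrite Ew.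
      exact: enorm_conv (fun j => y j t - ybar) (fun j => a_ge0 t i j).
    rewrite exchange_big le_eqVlt; apply/orP; left; apply/eqP.
    by apply: eq_bigr => j _; rewrite -mulr_suml Hcol mul1r.
  have Se : forall i, - (kap2 * (enorm (y i t - ybar) + enorm (w i - ybar)))
                        <= dotv (gi i) (y i t - w i).
    move=> i.
    have hyw : enorm (y i t - w i) <= enorm (y i t - ybar) + enorm (w i - ybar).
      have -> : y i t - w i = (y i t - ybar) + - (w i - ybar).
        by rewrite opprB addrA subrK.
      by apply: le_trans (enormD _ _) _; rewrite enormN.
    have := CSabs (gi i) (y i t - w i).
    have := hg i; have := enorm_ge0 (gi i); have := enorm_ge0 (y i t - w i).
    rewrite ler_norml => ? ? ? /andP[? ?]; nra.
  apply: le_trans (ler_sum _ (fun i _ => Se i)).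
  rewrite sumrN -mulr_sumr big_split /= -/D1.
  have := enorm_ge0 (y i0 t); nra.
have D1_ge0 : 0 <= D1 by apply: sumr_ge0 => i _; apply: enorm_ge0.
have D2_ge0 : 0 <= D2 by apply: sumr_ge0 => i _; apply: sqr_ge0.
have Y_ge0 : 0 <= Y by apply: sumr_ge0 => i _; apply: sqr_ge0.
have sq_ge0 : 0 <= Num.sqrt (n%:R : R) by apply: sqrtr_ge0.
have n1 : (1 : R) <= n%:R by rewrite ler1n.
rewrite sumrB -/Y -/Yp.
clearbody et W GW GG Y Yp G D1 D2.
have P1 : 0 <= et * (G - GW + 2 * kap2 * D1) by apply: mulr_ge0; lra.
have P2 : 0 <= et ^+ 2 * (GW + n%:R * kap2 ^+ 2) by apply: mulr_ge0; [apply: sqr_ge0| lra].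
have P3 : 0 <= (1 - et) ^+ 2 * (Y - W) by apply: mulr_ge0; [apply: sqr_ge0| lra].
have P4 : 0 <= et ^+ 2 * (n%:R * kap2 ^+ 2 - GG) by apply: mulr_ge0; [apply: sqr_ge0| lra].
have P5 : 0 <= et * Num.sqrt n%:R * kap2 * D1 by rewrite !mulr_ge0 // ltW.
have P6 : 0 <= (1 - (1 - et) ^+ 2) * Y by apply: mulr_ge0 => //; nra.
have P7 : 0 <= et ^+ 2 * kap2 ^+ 2 * (n%:R ^+ 2 - n%:R) by rewrite !mulr_ge0 ?sqr_ge0 //; nra.
have P8 : 0 <= et * (1 - et) * (GW + n%:R * kap2 ^+ 2) by rewrite !mulr_ge0 //; lra.
nra.
Qed.
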